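(* Let $\widehat{\mathbf Y}$ be an optimal solution of the SDP, $\epsilon=\|\widehat{\mathbf Y}-\mathbf Y^*\|_1/\|\mathbf Y^*\|_1$, and let $U_1,\dots,U_k$ be the sets produced by Step 2 applied to the output of Step 1 on input $\widehat{\mathbf Y},n,k$ (both described in the context). Then there exist a permutation $\pi$ of $[k]$ and a universal constant $C>0$ such that \[ \Big|\bigcup_{a\in[k]}C^*_a\cap U_{\pi(a)}\Big|\ge(1-C\epsilon)n. \]
   Context: Integers $n\ge4$, $k\ge2$, $k\mid n$; points $\mathbf h_1,\dots,\mathbf h_n\in\mathbb R^d$ with ground-truth labels $\sigma^*:[n]\to[k]$ and clusters $C^*_a=\{i:\sigma^*(i)=a\}$, each of size $n/k$. $Y^*_{ij}=\mathbb 1\{\sigma^*(i)=\sigma^*(j)\}$. SDP: $A_{ij}=\|\mathbf h_i-\mathbf h_j\|_2^2$; $\widehat{\mathbf Y}$ minimizes $\langle\mathbf Y,\mathbf A\rangle$ subject to $\mathbf Y\mathbf 1_n=\frac nk\mathbf 1_n$, $\mathbf Y\succeq0$, $\mathrm{diag}(\mathbf Y)=\mathbf 1_n$, $\mathbf Y\ge0$. $\|\cdot\|_1$ is the entrywise $\ell_1$ norm; $\widehat{\mathbf Y}_{u\bullet}$ is the $u$-th row. Step 1: set $V=[n]$, $t=0$; while $V\setminus\bigcup_{i\le t}B_i\ne\emptyset$: increase $t$, let $V_t=V\setminus\bigcup_{i<t}B_i$, for $u\in V_t$ let $B(u)=\{w\in V_t:\|\widehat{\mathbf Y}_{u\bullet}-\widehat{\mathbf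 Y}_{w\bullet}\|_1\le\frac{n}{4k}\}$, let $B_t$ be a largest $B(u)$, truncated arbitrarily to size $n/k$ if larger; output $B_1,\dots,B_{k'}$. Step 2: choose the $k$ sets of largest cardinality among $B_1,\dots,B_{k'}$, rename them $U_1,\dots,U_k$, and distribute the elements of the remaining sets arbitrarily among $U_1,\dots,U_k$ so that each $U_t$ has exactly $n/k$ elements. *)

(* Defs.v *)
From HB Require Import structures.
From mathcomp Require Import all_boot all_order all_algebra all_fingroup.
From mathcomp Require Import reals.
Set Implicit Arguments. Unset Strict Implicit. Unset Printing Implicit Defensive.
Import Order.TTheory GRing.Theory Num.Theory.
Local Open Scope ring_scope.

Section Defs.
Variable R : realType.

Definition sqdist (d : nat) (x y : 'rV[R]_d) : R :=
  \sum_(l < d) (x ord0 l - y ord0 l) ^+ 2.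

Definition distmx (n d : nat) (h : 'I_n -> 'rV[R]_d) : 'M[R]_n :=
  \matrix_(i, j) sqdist (h i) (h j).

Definition Ystar (n k : nat) (sigma : 'I_n -> 'I_k) : 'M[R]_n :=
  \matrix_(i, j) (sigma i == sigma j)%:R.

Definition cluster (n k : nat) (sigma : 'I_n -> 'I_k) (a : 'I_k) : {set 'I_n} :=
  [set i | sigma i == a].

Definition l1norm (m p : nat) (M : 'M[R]_(m, p)) : R :=
  \sum_(i < m) \sum_(j < p) `|M i j|.

Definition frob (n : nat) (Y A : 'M[R]_n) : R :=
  \sum_(i < n) \sum_(j < n) Y i j * A i j.

Definition psd (n : nat) (Y : 'M[R]_n) : Prop :=
  Y^T = Y /\ forall x : 'cV[R]_n, 0 <= (x^T *m Y *m x) ord0 ord0.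

Definition sdp_feasible (n k : nat) (Y : 'M[R]_n) : Prop :=
  [/\ forall i, \sum_(j < n) Y i j = (n %/ k)%N%:R,
      psd Y,
      forall i, Y i i = 1
    & forall i j, 0 <= Y i j].

Definition sdp_optimal (n k d : nat) (h : 'I_n -> 'rV[R]_d) (Y : 'M[R]_n) : Prop :=
  sdp_feasible k Y /\
  forall Y' : 'M[R]_n, sdp_feasible k Y' -> frob Y (distmx h) <= frob Y' (distmx h).

Definition rowdist (n : nat) (Y : 'M[R]_n) (u w : 'I_n) : R :=
  \sum_(j < n) `|Y u j - Y w j|.

(* V_t = [n] \ (B_1 u ... u B_{t-1}), with 0-based indexing of the list Bs *)
Definition Vrem (n : nat) (Bs : seq {set 'I_n}) (t : nat) : {set 'I_n} :=
  ~: \bigcup_(i < t) nth set0 Bs i.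

Definition ball (n k : nat) (Y : 'M[R]_n) (V : {set 'I_n}) (u : 'I_n) : {set 'I_n} :=
  [set w in V | rowdist Y u w <= n%:R / (4 * k)%:R].

(* Bs is a possible output B_1,...,B_{k'} of Step 1 on input Y, n, k
   (all arbitrary choices allowed) *)
Definition step1_output (n k : nat) (Y : 'M[R]_n) (Bs : seq {set 'I_n}) : Prop :=
  (forall t : nat, (t < size Bs)%N ->
     let V := Vrem Bs t in
     V != set0 /\
     exists u, [/\ u \in V,
       (forall u', u' \in V -> #|ball k Y V u'| <= #|ball k Y V u|)%N
     & if (#|ball k Y V u| <= (n %/ k)%N)%N
       then nth set0 Bs t = ball k Y V u
       else nth set0 Bs t \subset ball k Y V u /\ #|nth set0 Bs t| = (n %/ k)%N])
  /\ Vrem Bs (size Bs) = set0.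

End Defs.

Definition step2_output (n k : nat) (Bs : seq {set 'I_n}) (U : 'I_k -> {set 'I_n}) : Prop :=
  exists f : 'I_k -> 'I_(size Bs),
    [/\ injective f,
        forall (t : 'I_k) (j : 'I_(size Bs)), j \notin codom f ->
          (#|nth set0 Bs j| <= #|nth set0 Bs (f t)|)%N,
        forall t, nth set0 Bs (f t) \subset U t,
        forall t, #|U t| = (n %/ k)%N
      &
        (forall t t', t != t' -> [disjoint U t & U t']) /\
        \bigcup_(t < k) U t = setT].

(* Main.v *)
Require Import Defs.
From HB Require Import structures.
From mathcomp Require Import all_boot all_order all_algebra all_fingroup.
From mathcomp Require Import reals.
From Stdlib Require Import Lia.
From mathcomp Require Import zify ring lra.
Set Implicit Arguments. Unset Strict Implicit. Unset Printing Implicit Defensive.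
Import Order.TTheory GRing.Theory Num.Theory.

Lemma card_bigcup_disj (T I : finType) (F : I -> {set T}) (J : {set I}) :
  {in J &, forall i j, i != j -> [disjoint F i & F j]} ->
  #|\bigcup_(j in J) F j| = \sum_(j in J) #|F j|.
Proof.
move: {2}#|J| (erefl #|J|) => c; elim: c J => [|c IH] J cJ dis.
  move/eqP: cJ; rewrite cards_eq0 => /eqP ->.
  by rewrite !big_set0 cards0.
have [j jJ] : exists j, j \in J.
  by apply/set0Pn; rewrite -card_gt0 cJ.
rewrite (bigD1 j) //= (bigD1 j jJ) /=.
have e1 : forall G : I -> {set T}, \bigcup_(i | (i \in J) && (i != j)) G i = \bigcup_(i in J :\ j) G i.
  by move=> G; apply: eq_bigl => i; rewrite in_setD1 andbC.
have e2 : \sum_(i | (i \in J) && (i != j)) #|F i| = \sum_(i in J :\ j) #|F i|.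
  by apply: eq_bigl => i; rewrite in_setD1 andbC.
rewrite e1 e2 cardsU.
have -> : F j :&: \bigcup_(i in J :\ j) F i = set0.
  apply/disjoint_setI0.
  apply: bigcup_disjoint => i; rewrite in_setD1 => /andP[ij iJ].
  by apply: dis => //; rewrite eq_sym.
rewrite cards0 subn0 IH //.
  by move: cJ; rewrite (cardsD1 j J) jJ add1n => -[].
by move=> x y; rewrite !in_setD1 => /andP[_ xJ] /andP[_ yJ]; apply: dis.
Qed.

Lemma perm_ext (T : finType) (D : {set T}) (g : T -> T) :
  {in D &, injective g} -> exists p : {perm T}, {in D, forall x, p x = g x}.
Proof.
move=> ginj.
set E := g @: D.
set sD := enum (~: D); set sE := enum (~: E).
have szE : size sD = size sE.
  rewrite -!cardE.
  have h1 := cardsC D; have h2 := cardsC E.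
  rewrite /E card_in_imset // in h2.
  by apply/eqP; rewrite -(eqn_add2l #|D|) h1 h2.
pose h x := if x \in D then g x else nth x sE (index x sD).
have inS : forall x, x \notin D -> nth x sE (index x sD) \in sE.
  move=> x xD; apply: mem_nth; rewrite -szE index_mem mem_enum inE xD //.
have hinj : injective h.
  move=> x y; rewrite /h; case: ifP => xD; case: ifP => yD.
  - exact: ginj.
  - move=> e; have := inS y (negbT yD); rewrite -e mem_enum inE.
    by rewrite (imset_f g xD).
  - move=> e; have := inS x (negbT xD); rewrite e mem_enum inE.
    by rewrite (imset_f g yD).
  - have xs : x \in sD by rewrite mem_enum inE xD.
    have ys : y \in sD by rewrite mem_enum inE yD.
    have ix : (index x sD < size sE)%N by rewrite -szE index_mem.
    have iy : (index y sD < size sE)%N by rewrite -szE index_mem.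
    rewrite (set_nth_default x y iy) => /eqP.
    rewrite nth_uniq ?enum_uniq // => /eqP e.
    by rewrite -(nth_index x xs) e nth_index.
exists (perm hinj) => x xD; by rewrite permE /h xD.
Qed.

Lemma inCl n k (sigma : 'I_n -> 'I_k) a x : (x \in cluster sigma a) = (sigma x == a).
Proof. by rewrite inE. Qed.

Lemma core (R : realType) (n k : nat) (Y : 'M[R]_n) (sigma : 'I_n -> 'I_k)
  (Gd : {set 'I_n}) (Bs : seq {set 'I_n}) (U : 'I_k -> {set 'I_n}) :
  (0 < k)%N ->
  (forall a, #|cluster sigma a| = n %/ k) ->
  (forall u w, u \in Gd -> w \in Gd -> sigma u = sigma w ->
     (rowdist Y u w <= n%:R / (4 * k)%:R)%R) ->
  (forall x w1 w2, w1 \in Gd -> w2 \in Gd ->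
     (rowdist Y x w1 <= n%:R / (4 * k)%:R)%R ->
     (rowdist Y x w2 <= n%:R / (4 * k)%:R)%R -> sigma w1 = sigma w2) ->
  step1_output k Y Bs -> step2_output Bs U ->
  exists pi : {perm 'I_k},
    n <= #|\bigcup_(a < k) (cluster sigma a :&: U (pi a))| + 3 * #|~: Gd|.
Proof.
move=> k0 csz H1 H2 [st1 cov] [f [finj fmax fsub Usz [Udis Ucov]]].
set N := size Bs.
set B := fun j : nat => nth set0 Bs j.
have Bball : forall t, t < N -> exists u,
    [/\ u \in Vrem Bs t,
        forall u', u' \in Vrem Bs t -> #|ball k Y (Vrem Bs t) u'| <= #|ball k Y (Vrem Bs t) u|,
        B t \subset ball k Y (Vrem Bs t) u &
        (#|ball k Y (Vrem Bs t) u| <= n %/ k -> B t = ball k Y (Vrem Bs t) u) /\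
        (~~ (#|ball k Y (Vrem Bs t) u| <= n %/ k) -> #|B t| = n %/ k)].
  move=> t tN; have /= [_ [u [uV umax hc]]] := st1 t tN.
  exists u; split => //.
  - by rewrite /B; case: ifP hc => _ => [-> | []].
  - by rewrite /B; split => h; move: hc; rewrite ?h ?(negbTE h) => [] // [].
have Bsub : forall t, t < N -> B t \subset Vrem Bs t.
  move=> t tN; have [u [_ _ s _]] := Bball t tN.
  apply: subset_trans s _; apply/subsetP => x; rewrite inE => /andP[].
  done.
have Bdis : forall s t, s < N -> t < N -> s != t -> [disjoint B s & B t].
  have lt : forall s t, t < N -> s < t -> [disjoint B s & B t].
    move=> s t tN st; apply/pred0P => x /=; apply/andP => -[xs xt].
    have := subsetP (Bsub t tN) x xt; rewrite /Vrem inE => /bigcupP; apply.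
    by exists (Ordinal st).
  move=> s t sN tN; rewrite neq_ltn => /orP[] st; first exact: lt.
  by rewrite disjoint_sym; apply: lt.
have cover : forall x, exists2 t, t < N & x \in B t.
  move=> x; have : x \in ~: Vrem Bs N by rewrite cov in_setC in_set0.
  by rewrite in_setC /Vrem in_setC negbK => /bigcupP[i _ xi]; exists i.
set G := fun a => cluster sigma a :&: Gd.
have inG : forall a x, (x \in G a) = (sigma x == a) && (x \in Gd).
  by move=> a x; rewrite /G inE inCl.
set t := fun a => find (fun X : {set 'I_n} => X :&: G a != set0) Bs.
set P := [set a | G a != set0].
have tP : forall a, a \in P -> [/\ t a < N, B (t a) :&: G a != set0 &
            forall i, i < t a -> B i :&: G a = set0].
  move=> a; rewrite inE => /set0Pn[x xG].
  have [i iN xi] := cover x.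
  have hs : has (fun X : {set 'I_n} => X :&: G a != set0) Bs.
    apply/(has_nthP set0); exists i => //.
    by apply/set0Pn; exists x; rewrite inE xi.
  split; first by rewrite -has_find.
    exact: (nth_find set0 hs).
  by move=> j jt; apply/eqP; apply: negbFE; apply: (before_find set0 jt).
have K : forall a, a \in P ->
    (forall x, x \in B (t a) -> x \in Gd -> sigma x = a) /\ #|G a| <= #|B (t a)|.
  move=> a aP; have [tN ne bef] := tP a aP.
  have [u [uV umax Bb [c1 c2]]] := Bball _ tN.
  have [v] := set0Pn _ ne; rewrite inE inG => /andP[vB /andP[/eqP va vGd]].
  have vball := subsetP Bb v vB; move: (vball); rewrite inE => /andP[vV uv].
  split.
    move=> x xB xGd; have := subsetP Bb x xB; rewrite inE => /andP[_ ux].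
    by rewrite -va; apply: (H2 u) => //.
  have GV : G a \subset Vrem Bs (t a).
    apply/subsetP => y yG; rewrite /Vrem in_setC; apply/bigcupP => -[i _ yi].
    have := bef i (ltn_ord i); move/setP/(_ y); rewrite inE yi yG inE.
    done.
  have Gb : G a \subset ball k Y (Vrem Bs (t a)) v.
    apply/subsetP => y yG; rewrite inE (subsetP GV y yG) /=.
    move: yG; rewrite inG => /andP[/eqP ya yGd].
    by apply: H1 => //; rewrite va ya.
  have le1 := leq_trans (subset_leq_card Gb) (umax v vV).
  case: (boolP (#|ball k Y (Vrem Bs (t a)) u| <= n %/ k)) => h.
    by rewrite (c1 h).
  rewrite (c2 h) -(csz a); apply: subset_leq_card; apply/subsetP => y.
  by rewrite inG inCl => /andP[].
have tinj : {in P &, forall a a', t a = t a' -> a = a'}.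
  move=> a a' aP a'P e; have [_ ne _] := tP a aP.
  have [v] := set0Pn _ ne; rewrite inE inG => /andP[vB /andP[/eqP va vGd]].
  have [K1 _] := K a' a'P; rewrite -va; apply: K1 => //; by rewrite -e.
pose j0 : 'I_N := f (Ordinal k0).
pose tt a : 'I_N := insubd j0 (t a).
have ttE : forall a, a \in P -> val (tt a) = t a.
  by move=> a aP; rewrite val_insubd; have [-> _ _] := tP a aP.
have ttinj : {in P &, injective tt}.
  by move=> a a' aP a'P e; apply: tinj => //; rewrite -ttE // -(ttE a') // e.
pose Bo (j : 'I_N) := B j.
have Bodis : forall (J : {set 'I_N}), {in J &, forall i j, i != j -> [disjoint Bo i & Bo j]}.
  by move=> J i j _ _ ij; apply: Bdis.
pose T := tt @: P.
pose S := f @: [set: 'I_k].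
pose H := \bigcup_(j in T) Bo j.
have GdH : #|Gd| <= #|H|.
  rewrite /H card_bigcup_disj // big_imset //=.
  have -> : #|Gd| = \sum_(a in P) #|G a|.
    have e1 : Gd = \bigcup_(a in [set: 'I_k]) G a.
      apply/setP => x; apply/idP/bigcupP => [xG|[a _]]; last by rewrite inG => /andP[].
      by exists (sigma x); rewrite ?in_setT // inG eqxx.
    rewrite e1 card_bigcup_disj; last first.
      move=> a a' _ _ aa; rewrite -setI_eq0; apply/eqP/setP => x; rewrite inE !inG in_set0.
      apply/negP => /andP[/andP[/eqP xa _] /andP[/eqP xa' _]].
      by move: aa; rewrite -xa -xa' eqxx.
    rewrite [RHS]big_mkcond /=; apply: eq_big => a; first by rewrite inE.
    move=> _; rewrite inE; case: (G a =P set0) => [->|] //=; by rewrite cards0.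
  by apply: leq_sum => a aP; rewrite /Bo ttE //; have [_ ->] := K a aP.
have cH : #|~: H| <= #|~: Gd|.
  have a1 := cardsID Gd H; have a2 := cardsID Gd (~: H);
  have a3 := cardsID H Gd; have a4 := cardsID H (~: Gd).
  have e1 : ~: H :&: Gd = Gd :\: H by apply/setP => x; rewrite !inE andbC.
  have e2 : ~: H :\: Gd = ~: Gd :\: H by apply/setP => x; rewrite !inE andbC.
  have e3 : H :\: Gd = ~: Gd :&: H by apply/setP => x; rewrite !inE andbC.
  have e4 : H :&: Gd = Gd :&: H by rewrite setIC.
  rewrite e1 e2 in a2; rewrite e3 e4 in a1.
  lia.
have cS : #|S| = k by rewrite card_imset // cardsT card_ord.
have cT : #|T| <= k.
  by apply: leq_trans (leq_imset_card _ _) _; apply: leq_trans (max_card _) _; rewrite card_ord.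
have cST : #|T :\: S| <= #|S :\: T|.
  have a1 := cardsID T S; have a2 := cardsID S T.
  rewrite [S :&: T]setIC in a1; by rewrite -(leq_add2l #|T :&: S|) a1 a2 cS.
pose W := \bigcup_(j in T :\: S) Bo j.
have cW : #|W| <= #|~: Gd|.
  apply: leq_trans cH.
  pose M := \max_(j in T :\: S) #|Bo j|.
  have s1 : \sum_(j in T :\: S) #|Bo j| <= #|T :\: S| * M.
    rewrite -sum_nat_const; apply: leq_sum => j jTS.
    by apply: (leq_bigmax_cond (F := fun j => #|Bo j|)).
  have s2 : #|S :\: T| * M <= \sum_(j in S :\: T) #|Bo j|.
    rewrite -sum_nat_const; apply: leq_sum => j.
    rewrite inE => /andP[_ /imsetP[c _ ->]].
    apply/bigmax_leqP => i; rewrite inE => /andP[iS _].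
    apply: fmax; apply/negP => /codomP[c' ic]; move: iS; rewrite ic.
    by rewrite imset_f.
  have s3 : #|\bigcup_(j in S :\: T) Bo j| <= #|~: H|.
    apply: subset_leq_card; apply/bigcupsP => j; rewrite inE => /andP[jT _].
    apply/subsetP => x xj; rewrite in_setC; apply/bigcupP => -[i iT xi].
    have ji : j != i by apply: contraNneq jT => ->.
    have := Bdis j i (ltn_ord j) (ltn_ord i) ji.
    by rewrite -setI_eq0 => /eqP/setP/(_ x); rewrite !inE xj xi.
  rewrite /W card_bigcup_disj //; rewrite (card_bigcup_disj (Bodis (S :\: T))) in s3.
  apply: leq_trans s3; apply: (leq_trans s1); apply: leq_trans s2.
  by rewrite leq_mul2r cST orbT.
pose D := [set a in P | tt a \in S].
pose g a := odflt a [pick c | f c == tt a].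
have gE : forall a, a \in D -> f (g a) = tt a.
  move=> a; rewrite inE => /andP[_ /imsetP[c _ ec]].
  rewrite /g; case: pickP => [c' /eqP //|/(_ c)]; by rewrite ec eqxx.
have ginj : {in D &, injective g}.
  move=> a a' aD a'D e; apply: ttinj.
  - by move: aD; rewrite inE => /andP[].
  - by move: a'D; rewrite inE => /andP[].
  by rewrite -gE // -(gE a') // e.
have [pi piE] := perm_ext ginj.
exists pi.
set Cs := \bigcup_(a < k) _.
have sub : ~: Cs \subset (~: Gd :|: ~: H) :|: W.
  apply/subsetP => x; rewrite in_setC; apply: contraNT.
  rewrite !in_setU !in_setC !negb_or !negbK => /andP[/andP[xG xH] xW].
  move/bigcupP: xH => [j jT xj].
  have [a aP ja] := imsetP jT.
  have xa : sigma x = a.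
    by have [K1 _] := K a aP; apply: K1 => //; rewrite -ttE // -ja.
  have jS : j \in S.
    apply: contraNT xW => jS; apply/bigcupP; exists j => //; by rewrite inE jS.
  have aD : a \in D by rewrite inE aP -ja jS.
  apply/bigcupP; exists a => //; rewrite inE inCl xa eqxx /= piE //.
  apply: (subsetP (fsub (g a))); by rewrite gE // -ja.
have cC := cardsC Cs; rewrite card_ord in cC.
apply: (@leq_trans (#|Cs| + #|~: Cs|)); first by rewrite cC.
rewrite leq_add2l.
apply: leq_trans (subset_leq_card sub) _.
apply: leq_trans (leq_card_setU _ _) _.
apply: leq_trans (leq_add (leq_card_setU _ _) (leqnn _)) _.
lia.
Qed.

Section Ana.
Variable R : realType.
Local Open Scope ring_scope.

Lemma sum_ind n k (sigma : 'I_n -> 'I_k) a :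
  \sum_(j < n) ((sigma j == a)%:R : R) = (#|cluster sigma a|)%:R.
Proof.
rewrite -natr_sum; congr (_%:R).
rewrite /cluster -sum1dep_card /=.
rewrite [RHS]big_mkcond; apply: eq_bigr => j _; by case: (sigma j == a).
Qed.

Lemma Ystar_row n k (sigma : 'I_n -> 'I_k) u w :
  sigma u != sigma w ->
  \sum_(j < n) `|Ystar R sigma u j - Ystar R sigma w j| =
  (#|cluster sigma (sigma u)| + #|cluster sigma (sigma w)|)%:R.
Proof.
move=> ne; rewrite natrD -!sum_ind -big_split /=.
apply: eq_bigr => j _; rewrite !mxE.
case: (sigma u =P sigma j) => [e|e]; case: (sigma w =P sigma j) => [e'|e'] /=.
- by move: ne; rewrite e e' eqxx.
- by rewrite e eqxx subr0 normr1 /= (introF eqP (fun h => e' (esym h))) addr0.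
- by rewrite e' eqxx sub0r normrN normr1 (introF eqP (fun h => e (esym h))) add0r.
- rewrite (introF eqP (fun h => e (esym h))) (introF eqP (fun h => e' (esym h))).
  by rewrite subr0 normr0 addr0.
Qed.

Lemma lra1 (x y a b : R) : 0 < x -> x + x <= y + a + b -> y <= x/2 -> a <= x/8 -> b <= x/8 -> False.
Proof. move=> *; lra. Qed.

Lemma rowdist_sym n (Y : 'M[R]_n) u w : rowdist Y u w = rowdist Y w u.
Proof. by apply: eq_bigr => j _; rewrite distrC. Qed.

Lemma rowdist_tri n (Y : 'M[R]_n) u v w : rowdist Y u w <= rowdist Y u v + rowdist Y v w.
Proof.
rewrite /rowdist -big_split /=; apply: ler_sum => j _.
by rewrite (le_trans _ (ler_normD _ _)) // addrA subrK.
Qed.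

End Ana.

Unset Implicit Arguments.
Local Open Scope ring_scope.

Theorem lemma13 (R : realType) :
  exists C : R, 0 < C /\
  forall (n k d : nat) (h : 'I_n -> 'rV[R]_d) (sigma : 'I_n -> 'I_k)
         (Yhat : 'M[R]_n) (Bs : seq {set 'I_n}) (U : 'I_k -> {set 'I_n}),
    (4 <= n)%N -> (2 <= k)%N -> (k %| n)%N ->
    (forall a : 'I_k, #|cluster sigma a| = (n %/ k)%N) ->
    sdp_optimal k h Yhat ->
    step1_output k Yhat Bs ->
    step2_output Bs U ->
    exists pi : {perm 'I_k},
      (1 - C * (l1norm (Yhat - Ystar R sigma) / l1norm (Ystar R sigma))) * n%:R
        <= #|\bigcup_(a < k) (cluster sigma a :&: U (pi a))|%:R.
Proof.
exists 24%:R; split; first by rewrite ltr0n.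
move=> n k d h sigma Yhat Bs U n4 k2 kn csz _ st1 st2.
set m := (n %/ k)%N.
have nmk : n = (m * k)%N by rewrite /m divnK.
have k0 : (0 < k)%N by apply: leq_trans k2.
have m0 : (0 < m)%N by rewrite lt0n; apply/eqP => m0; move: n4; rewrite nmk m0.
set Ys := Ystar R sigma.
pose e u := \sum_(j < n) `|Yhat u j - Ys u j|.
have e0 : forall u, 0 <= e u by move=> u; apply: sumr_ge0 => j _.
pose Gd := [set u | e u <= m%:R / 8].
have thrE : n%:R / (4 * k)%:R = m%:R / 4 :> R.
  rewrite nmk natrM (natrM _ 4 k); field.
  by rewrite pnatr_eq0 -lt0n.
have mR0 : 0 < m%:R :> R by rewrite ltr0n.
have H1 : forall u w, u \in Gd -> w \in Gd -> sigma u = sigma w ->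
     rowdist Yhat u w <= n%:R / (4 * k)%:R.
  move=> u w; rewrite !inE => eu ew suw; rewrite thrE.
  apply: (@le_trans _ _ (e u + e w)); last by lra.
  rewrite /rowdist /e -big_split /=; apply: ler_sum => j _.
  have -> : Yhat u j - Yhat w j = (Yhat u j - Ys u j) - (Yhat w j - Ys w j).
    by rewrite /Ys !mxE suw; ring.
  by rewrite (le_trans (ler_normB _ _)).
have H2 : forall x w1 w2, w1 \in Gd -> w2 \in Gd ->
     rowdist Yhat x w1 <= n%:R / (4 * k)%:R ->
     rowdist Yhat x w2 <= n%:R / (4 * k)%:R -> sigma w1 = sigma w2.
  move=> x w1 w2; rewrite !inE thrE => e1 e2 d1 d2.
  apply/eqP; apply: contraT => ne.
  have := Ystar_row R ne; rewrite !csz -/m => ys.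
  have t1 : rowdist Yhat w1 w2 <= m%:R / 2.
    apply: le_trans (rowdist_tri _ _ x _) _; rewrite rowdist_sym; lra.
  have t2 : \sum_(j < n) `|Ys w1 j - Ys w2 j| <= rowdist Yhat w1 w2 + e w1 + e w2.
    rewrite /rowdist /e -!big_split /=; apply: ler_sum => j _.
    have -> : Ys w1 j - Ys w2 j = (Yhat w1 j - Yhat w2 j) - (Yhat w1 j - Ys w1 j) + (Yhat w2 j - Ys w2 j).
      by ring.
    apply: le_trans (ler_normD _ _) _; rewrite lerD2r.
    by apply: le_trans (ler_normB _ _) _.
  rewrite ys natrD in t2; exfalso; exact: (lra1 mR0 t2 t1 e1 e2).
have [pi hpi] := core k0 csz H1 H2 st1 st2.
exists pi.
set cnt := #|_|.
set b := #|~: Gd|.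
set E := l1norm (Yhat - Ys).
have EE : E = \sum_u e u.
  by apply: eq_bigr => u _; apply: eq_bigr => j _; rewrite !mxE.
have LY : l1norm Ys = n%:R * m%:R.
  rewrite /l1norm (eq_bigr (fun _ => m%:R)); last first.
    move=> i _; rewrite /m -(csz (sigma i)) -sum_ind; apply: eq_bigr => j _.
    by rewrite /Ys mxE ger0_norm ?ler0n // eq_sym.
  by rewrite sumr_const card_ord mulr_natl.
have bE : b%:R * (m%:R / 8) <= E.
  rewrite EE (bigID (fun u => u \in ~: Gd)) /=.
  apply: (@le_trans _ _ (\sum_(i in ~: Gd) e i)); last first.
    by rewrite lerDl; apply: sumr_ge0 => u _.
  rewrite mulr_natl -sumr_const.
  by apply: ler_sum => u; rewrite !inE -ltNge => /ltW.
have hn : (n%:R : R) <= cnt%:R + 3 * b%:R.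
  by rewrite -(natrM _ 3) -natrD ler_nat.
have n0 : 0 < n%:R :> R by rewrite ltr0n; apply: leq_trans n4.
rewrite LY.
have key : 3 * b%:R <= 24%:R * (E / (n%:R * m%:R)) * n%:R.
  have -> : 24%:R * (E / (n%:R * m%:R)) * n%:R = 24%:R * E / m%:R.
    by field; apply/andP; split; rewrite gt_eqF.
  rewrite ler_pdivlMr //; lra.
lra.
Qed.
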